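(* Let $G$ be a graph and $p$ a pendant vertex of $G$ with $N(p)=\{v\}$. Then: (1) $p$ and $v$ belong to every MDNS of $G$, and there exists an MDNS $S$ of $G$ such that $p$ and $v$ are the last two vertices of $S$; (2) if there exists an MDNS $S'$ of $G-p$ such that $v$ does not belong to $S'$, then $\tilde\gamma_{gr}^{\times 2}(G)=\tilde\gamma_{gr}^{\times 2}(G-p)+2$; otherwise $\tilde\gamma_{gr}^{\times 2}(G)=\tilde\gamma_{gr}^{\times 2}(G-p)+1$.
   Context: Graphs are finite, simple, undirected; $N[v]$ is the closed neighborhood, $N(v)$ the open neighborhood; a pendant vertex has degree 1. A sequence $S=(v_1,\dots,v_k)$ of distinct vertices of $G$ is a double neighborhood sequence (DNS) if for each $i$ some $u\in N[v_i]$ satisfies $|\{j<i: u\in N[v_j]\}|\le 1$. A maximum double neighborhood sequence (MDNS) of $G$ is a DNS of maximum length, and $\tilde\gamma_{gr}^{\times 2}(G)$ denotes this maximum length. *)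

(* Defs.v *)
From mathcomp Require Import all_boot.
Set Implicit Arguments. Unset Strict Implicit. Unset Printing Implicit Defensive.

(* A simple graph on vertex set V : {set T}, adjacency e : rel T
   (assumed symmetric and irreflexive in the theorem); only vertices of V
   and edges between them are considered (induced subgraph on V). *)
Section DNS.
Variables (T : finType) (V : {set T}) (e : rel T).

Definition cnbhd (v : T) : {set T} := [set u in V | (u == v) || e v u].
Definition onbhd (v : T) : {set T} := [set u in V | e v u].

Fixpoint dns_aux (pre rest : seq T) : bool :=
  match rest with
  | [::] => true
  | x :: r => [exists u in cnbhd x, count (fun w => u \in cnbhd w) pre <= 1]
              && dns_aux (rcons pre x) r
  end.

Definition is_dns (s : seq T) : bool := [&& uniq s, all (fun x => x \in V) s & dns_aux [::] s].

Definition is_mdns (s : seq T) : Prop :=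
  is_dns s /\ forall t : seq T, is_dns t -> size t <= size s.

(* gamma~_gr^{x2}: maximum length of a DNS (a DNS has length <= #|T|) *)
Definition gamma_gr2 : nat :=
  \max_(k < #|T|.+1 | [exists t : k.-tuple T, is_dns t]) k.
End DNS.

(* Main.v *)
Require Import Defs.
From mathcomp Require Import all_boot zify.
Set Implicit Arguments. Unset Strict Implicit. Unset Printing Implicit Defensive.

Section Gen.
Variables (T : finType) (V : {set T}) (e : rel T).

Lemma dns_size t : is_dns V e t -> size t <= #|T|.
Proof. by move=> /and3P[u _ _]; rewrite -(card_uniqP u); exact: max_card. Qed.

Lemma gamma_ub t : is_dns V e t -> size t <= gamma_gr2 V e.
Proof.
move=> H; have Ht : size t < #|T|.+1 by rewrite ltnS dns_size.
rewrite /gamma_gr2.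
apply: (@leq_bigmax_cond _ _ (fun k : 'I_#|T|.+1 => nat_of_ord k) (Ordinal Ht)).
by apply/existsP; exists (in_tuple t).
Qed.

Lemma gamma_att : exists t, is_dns V e t /\ size t = gamma_gr2 V e.
Proof.
pose A := [pred k : 'I_#|T|.+1 | [exists t : k.-tuple T, is_dns V e t]].
have HA : 0 < #|A|.
  apply/card_gt0P; exists ord0; rewrite inE /=.
  by apply/existsP; exists [tuple].
have [i0 Hi0 Hmax] := eq_bigmax_cond (fun k : 'I_#|T|.+1 => nat_of_ord k) HA.
move: Hi0; rewrite inE /= => /existsP[t Ht].
exists t; split => //; rewrite size_tuple.
by rewrite /gamma_gr2 -Hmax.
Qed.

Lemma mdnsE S : is_mdns V e S <-> is_dns V e S /\ size S = gamma_gr2 V e.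
Proof.
split.
- move=> [H1 H2]; split => //; apply/eqP; rewrite eqn_leq gamma_ub //=.
  by have [t [Ht <-]] := gamma_att; exact: H2.
- move=> [H1 H2]; split => // t Ht; rewrite H2; exact: gamma_ub.
Qed.

Lemma dns_aux_cat pre r s :
  dns_aux V e pre (r ++ s) = dns_aux V e pre r && dns_aux V e (pre ++ r) s.
Proof.
elim: r pre => [|x r IH] pre /=; first by rewrite cats0.
by rewrite IH -cat_rcons andbA.
Qed.

Lemma dns_aux_filter (P : pred T) rest pre pre' :
  dns_aux V e pre rest ->
  (forall u, count (fun w => u \in cnbhd V e w) pre' <= count (fun w => u \in cnbhd V e w) pre) ->
  dns_aux V e pre' (filter P rest).
Proof.
elim: rest pre pre' => [|x r IH] pre pre' //= /andP[/existsP[u /andP[Hu Hc]] Hr] Hle.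
case: (P x) => /=.
  apply/andP; split.
    apply/existsP; exists u; rewrite Hu /=; exact: leq_trans (Hle u) Hc.
  apply: (IH _ _ Hr) => w; rewrite -!cats1 !count_cat leq_add2r; exact: Hle.
apply: (IH _ _ Hr) => w; rewrite -!cats1 !count_cat; apply: leq_trans (Hle w) _.
exact: leq_addr.
Qed.
End Gen.

Section Main.
Variables (T : finType) (e : rel T).
Hypotheses (e_sym : symmetric e) (e_irr : irreflexive e).
Variables (p v : T).
Hypothesis hpend : onbhd [set: T] e p = [set v].

Let hv x : e p x = (x == v).
Proof.
have := congr1 (fun A : {set T} => x \in A) hpend; rewrite /= !inE /=. done.
Qed.

Let pv : p != v.
Proof. apply/eqP => E; have := hv v; rewrite -{1}E e_irr eqxx. done. Qed.

Let cnbhd_eq u w : u != p -> (u \in cnbhd [set~ p] e w) = (u \in cnbhd [set: T] e w).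
Proof. by move=> H; rewrite !inE H. Qed.

Let pin w : (p \in cnbhd [set: T] e w) = (w == p) || (w == v).
Proof. by rewrite !inE /= e_sym hv eq_sym. Qed.

Let cnt_p s : count (fun w => p \in cnbhd [set: T] e w) s = count_mem p s + count_mem v s.
Proof.
elim: s => //= w s ->; rewrite pin.
case: (eqVneq w p) => [->|]; first by rewrite (negbTE pv) /= addnA.
by move=> _ /=; rewrite addnCA.
Qed.

Lemma dns_up pre rest : dns_aux [set~ p] e pre rest -> dns_aux [set: T] e pre rest.
Proof.
elim: rest pre => [|x r IH] pre //= /andP[/existsP[u /andP[Hu Hc]] Hr].
rewrite IH // andbT; apply/existsP; exists u.
have up : u != p by move: Hu; rewrite !inE => /andP[].
rewrite -cnbhd_eq // Hu /=.
by rewrite (eq_count (a2 := fun w => u \in cnbhd [set~ p] e w)) // => w; rewrite cnbhd_eq.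
Qed.

Lemma dns_down pre rest : dns_aux [set: T] e pre rest ->
  all (fun x => p \notin cnbhd [set: T] e x) rest -> dns_aux [set~ p] e pre rest.
Proof.
elim: rest pre => [|x r IH] pre //= /andP[/existsP[u /andP[Hu Hc]] Hr] /andP[Hx Hall].
rewrite IH // andbT; apply/existsP; exists u.
have up : u != p by apply/eqP => E; move: Hx; rewrite -E Hu.
rewrite cnbhd_eq // Hu /=.
by rewrite (eq_count (a2 := fun w => u \in cnbhd [set: T] e w)) // => w; rewrite cnbhd_eq.
Qed.

Lemma append_x S x : is_dns [set: T] e S -> x \notin S ->
  count (fun w => p \in cnbhd [set: T] e w) S <= 1 -> (x == p) || (x == v) ->
  is_dns [set: T] e (S ++ [:: x]).
Proof.
move=> /and3P[u _ d] xS Hc Hx; apply/and3P; split.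
- by rewrite cat_uniq u /= orbF andbT.
- by apply/allP => y; rewrite inE.
- rewrite dns_aux_cat d /= andbT; apply/existsP; exists p; by rewrite pin Hx.
Qed.

Lemma gamma_lb S' : is_mdns [set~ p] e S' ->
  gamma_gr2 [set~ p] e + 1 + (v \notin S') <= gamma_gr2 [set: T] e.
Proof.
move/mdnsE => [/and3P[u a d] <-].
have pS : p \notin S'.
  by apply/negP => H; move/allP: a => /(_ _ H); rewrite !inE eqxx.
have D : is_dns [set: T] e S'.
  apply/and3P; split => //; [by apply/allP => y; rewrite inE | exact: dns_up].
have D1 : is_dns [set: T] e (S' ++ [:: p]).
  apply: append_x => //; last by rewrite eqxx.
  by rewrite cnt_p count_uniq_mem // count_uniq_mem // (negbTE pS) /=; case: (v \in S').
case vS: (v \in S') => /=.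
  by move: (gamma_ub D1); rewrite size_cat addn0.
have D2 : is_dns [set: T] e ((S' ++ [:: p]) ++ [:: v]).
  apply: append_x => //; last by rewrite eqxx orbT.
    by rewrite mem_cat vS inE eq_sym (negbTE pv).
  have uD1 : uniq (S' ++ [:: p]) by case/and3P: D1.
  by rewrite cnt_p !count_uniq_mem // !mem_cat vS !inE eq_sym (negbTE pv) eqxx orbT.
by move: (gamma_ub D2); rewrite !size_cat /= -addnA.
Qed.

Let P := fun w => p \notin cnbhd [set: T] e w.

Lemma filter_dns S : is_dns [set: T] e S -> is_mdns [set: T] e S ->
  is_dns [set~ p] e (filter P S) /\ size S <= size (filter P S) + 2
  /\ is_dns [set: T] e (filter P S ++ [:: p; v]).
Proof.
move=> D M; case/and3P: D => u a d.
have dT : dns_aux [set: T] e [::] (filter P S) by exact: (@dns_aux_filter _ _ _ P S [::] [::] d (fun u => leqnn 0)).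
have uf : uniq (filter P S) by rewrite filter_uniq.
have pF : p \notin filter P S by rewrite mem_filter /P pin eqxx.
have vF : v \notin filter P S by rewrite mem_filter /P pin eqxx orbT.
split; [|split].
- apply/and3P; split => //.
    by apply/allP => y; rewrite mem_filter /P pin in_setC1 negb_or => /andP[/andP[]].
  by apply: dns_down => //; exact: filter_all.
- rewrite -(count_predC P S) size_filter leq_add2l.
  rewrite (eq_count (a2 := fun w => p \in cnbhd [set: T] e w)); last by move=> w /=; rewrite negbK.
  rewrite cnt_p !count_uniq_mem //.
  by case: (p \in S); case: (v \in S).
- have D0 : is_dns [set: T] e (filter P S).
    by apply/and3P; split => //; apply/allP => y; rewrite inE.
  have D1 : is_dns [set: T] e (filter P S ++ [:: p]).
    apply: append_x => //; last by rewrite eqxx.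
    by rewrite cnt_p !count_uniq_mem // (negbTE pF) (negbTE vF).
  have D2 := append_x (x := v) D1.
  rewrite -cat1s catA; apply: D2; last by rewrite eqxx orbT.
    by rewrite mem_cat (negbTE vF) inE eq_sym (negbTE pv).
  have uD1 : uniq (filter P S ++ [:: p]) by case/and3P: D1.
  by rewrite cnt_p !count_uniq_mem // !mem_cat (negbTE vF) (negbTE pF) !inE eqxx eq_sym (negbTE pv).
Qed.

Lemma mdns_has S : is_mdns [set: T] e S -> (p \in S) && (v \in S).
Proof.
move=> M; have [D H] := M; have u : uniq S by case/and3P: D.
have Hx : forall x, (x == p) || (x == v) -> x \in S.
  move=> x Hx; apply/negPn/negP => xS.
  have cnt : count (fun w => p \in cnbhd [set: T] e w) S <= 1.
    rewrite cnt_p !count_uniq_mem //.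
    by move: xS; case/orP: Hx => /eqP -> /negbTE ->; case: (_ \in S).
  by have := H _ (append_x D xS cnt Hx); rewrite size_cat addn1 ltnn.
by rewrite !Hx ?eqxx ?orbT.
Qed.

Lemma exists_end : exists S, is_mdns [set: T] e S /\ exists S0, S = S0 ++ [:: p; v].
Proof.
have [t [Dt Et]] := gamma_att [set: T] e.
have M : is_mdns [set: T] e t by apply/mdnsE.
have [_ [Hs D2]] := filter_dns Dt M.
exists (filter P t ++ [:: p; v]); split; last by exists (filter P t).
apply/mdnsE; split => //; apply/eqP; rewrite eqn_leq gamma_ub // -Et size_cat /=.
exact: Hs.
Qed.

Lemma upper : exists f, is_dns [set~ p] e f /\ v \notin f /\
   gamma_gr2 [set: T] e <= size f + 2.
Proof.
have [t [Dt Et]] := gamma_att [set: T] e.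
have M : is_mdns [set: T] e t by apply/mdnsE.
have [D0 [Hs D2]] := filter_dns Dt M.
exists (filter P t); split => //; split; last by rewrite -Et.
by rewrite mem_filter /P pin eqxx orbT.
Qed.

Lemma part2a : (exists S', is_mdns [set~ p] e S' /\ v \notin S') ->
     gamma_gr2 [set: T] e = gamma_gr2 [set~ p] e + 2.
Proof.
move=> [S' [M vS]]; have lb := gamma_lb M; rewrite vS in lb.
have [f [Df [_ Hf]]] := upper; have := gamma_ub Df.
move: lb Hf; simpl; lia.
Qed.

Lemma part2b : ~ (exists S', is_mdns [set~ p] e S' /\ v \notin S') ->
     gamma_gr2 [set: T] e = gamma_gr2 [set~ p] e + 1.
Proof.
move=> N.
have [S' [DS ES]] := gamma_att [set~ p] e.
have lb := gamma_lb (proj2 (mdnsE _ _ _) (conj DS ES)).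
have [f [Df [vf Hf]]] := upper; have uf := gamma_ub Df.
have nf : size f != gamma_gr2 [set~ p] e.
  apply/eqP => Ef; apply: N; exists f; split => //; exact/mdnsE.
move: lb Hf uf nf; case: (v \notin S'); simpl => *; lia.
Qed.

End Main.

Theorem proposition3 (T : finType) (e : rel T)
  (e_sym : symmetric e) (e_irr : irreflexive e) (p v : T)
  (hpend : onbhd [set: T] e p = [set v]) :
  ((forall S, is_mdns [set: T] e S -> p \in S /\ v \in S) /\
   (exists S, is_mdns [set: T] e S /\ exists S0, S = S0 ++ [:: p; v])) /\
  ((exists S', is_mdns [set~ p] e S' /\ v \notin S') ->
     gamma_gr2 [set: T] e = gamma_gr2 [set~ p] e + 2) /\
  (~ (exists S', is_mdns [set~ p] e S' /\ v \notin S') ->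
     gamma_gr2 [set: T] e = gamma_gr2 [set~ p] e + 1).
Proof.
split; [split|split].
- by move=> S M; have /andP[] := mdns_has e_sym e_irr hpend M.
- exact: exists_end.
- exact: part2a.
- exact: part2b.
Qed.
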